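(* For real parameters $p,r$, the Stolarsky mean $E_{p,r}$ is stable if and only if $(p-2r)(r-2p)(p+r)=0$; i.e. the only stable Stolarsky means are the power means $E_{2r,r}=B_r$, $E_{p,2p}=B_p$, $E_{p,-p}=B_0$.
   Context: For $s,t>0$, $s\neq t$: $E_{p,r}(s,t)=\big[\frac{r(t^p-s^p)}{p(t^r-s^r)}\big]^{1/(p-r)}$ for $p\ne r$, $p,r\ne0$; $E_{r,r}(s,t)=e^{-1/r}\big(t^{t^r}/s^{s^r}\big)^{1/(t^r-s^r)}$ for $r\ne0$; $E_{0,r}(s,t)=\big[\frac{t^r-s^r}{r(\log t-\log s)}\big]^{1/r}$ for $r\ne0$ (and symmetrically $E_{p,0}=E_{0,p}$); $E_{0,0}(s,t)=\sqrt{st}$; $E_{p,r}(s,s)=s$. Power mean: $B_r(s,t)=\big(\frac{s^r+t^r}2\big)^{1/r}$ for $r\ne0$, $B_0(s,t)=\sqrt{st}$. A mean $M$ is stable if $M(s,t)=M\big(M(s,M(s,t)),M(M(s,t),t)\big)$ for all $s,t>0$. *)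

(* Defs.v *)
From Stdlib Require Import Reals.
Open Scope R_scope.

Definition stolarsky (p r s t : R) : R :=
  if Req_EM_T s t then s else
  if Req_EM_T p 0 then
    (if Req_EM_T r 0 then sqrt (s * t)
     else Rpower ((Rpower t r - Rpower s r) / (r * (ln t - ln s))) (1 / r))
  else if Req_EM_T r 0 then
    Rpower ((Rpower t p - Rpower s p) / (p * (ln t - ln s))) (1 / p)
  else if Req_EM_T p r then
    exp (- (1 / r)) *
      Rpower (Rpower t (Rpower t r) / Rpower s (Rpower s r))
             (1 / (Rpower t r - Rpower s r))
  else
    Rpower ((r * (Rpower t p - Rpower s p)) / (p * (Rpower t r - Rpower s r)))
           (1 / (p - r)).

Definition stable (M : R -> R -> R) : Prop :=
  forall s t : R, 0 < s -> 0 < t ->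
    M s t = M (M s (M s t)) (M (M s t) t).

(* Main.v *)
Require Import Defs.
From Stdlib Require Import Reals Lra Lia Psatz.
From Coquelicot Require Import Coquelicot.
Open Scope R_scope.

Definition Ok (k:nat) (f:R->R) := exists u0 D, 0 < u0 /\ forall u, 0 < u <= u0 -> Rabs (f u) <= D * u^k.

Lemma Ok_Dpos k f u0 D : 0 < u0 -> (forall u, 0 < u <= u0 -> Rabs (f u) <= D * u^k) -> 0 <= D.
Proof.
  intros H0 H. specialize (H u0 (conj H0 (Rle_refl _))).
  assert (0 < u0^k) by (apply pow_lt; lra).
  destruct (Rle_lt_dec 0 D) as [|Hn]; auto.
  assert (D * u0^k < 0) by nra. pose proof (Rabs_pos (f u0)). lra.
Qed.

Lemma Ok_add k f g : Ok k f -> Ok k g -> Ok k (fun u => f u + g u).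
Proof.
  intros [a [D [Ha H]]] [b [E [Hb H']]].
  exists (Rmin a b), (D+E). split. apply Rmin_glb_lt; auto.
  intros u [Hu Hu']. pose proof (Rmin_l a b). pose proof (Rmin_r a b).
  specialize (H u ltac:(lra)). specialize (H' u ltac:(lra)).
  eapply Rle_trans. apply Rabs_triang. lra.
Qed.

Lemma Ok_scal k c f : Ok k f -> Ok k (fun u => c * f u).
Proof.
  intros [a [D [Ha H]]]. exists a, (Rabs c * D). split; auto.
  intros u Hu. rewrite Rabs_mult. rewrite Rmult_assoc.
  apply Rmult_le_compat_l. apply Rabs_pos. auto.
Qed.

Lemma Ok_ext k f g : (forall u, 0 < u -> f u = g u) -> Ok k f -> Ok k g.
Proof.
  intros E [a [D [Ha H]]]. exists a, D. split; auto.
  intros u Hu. rewrite <- E by lra. auto.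
Qed.

Lemma Ok_mul j k n f g : Ok j f -> Ok k g -> (j + k = n)%nat -> Ok n (fun u => f u * g u).
Proof.
  intros [a [D [Ha H]]] [b [E [Hb H']]] Hn.
  exists (Rmin a b), (D*E). split. apply Rmin_glb_lt; auto.
  intros u [Hu Hu']. pose proof (Rmin_l a b). pose proof (Rmin_r a b).
  specialize (H u ltac:(lra)). specialize (H' u ltac:(lra)).
  rewrite Rabs_mult. subst n. rewrite pow_add.
  replace (D * E * (u ^ j * u ^ k)) with ((D * u^j) * (E * u^k)) by ring.
  apply Rmult_le_compat; auto; apply Rabs_pos.
Qed.

Lemma pow_le1 u n : 0 <= u <= 1 -> u^n <= 1.
Proof. intros Hu. induction n; simpl. lra. pose proof (pow_le u n ltac:(lra)). nra. Qed.

Lemma pow_le_1 u j k : 0 < u <= 1 -> (j <= k)%nat -> u^k <= u^j.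
Proof.
  intros Hu Hjk. replace k with (j + (k - j))%nat by lia. rewrite pow_add.
  assert (0 < u^j) by (apply pow_lt; lra).
  assert (u^(k-j) <= 1). { apply pow_le1; lra. } nra.
Qed.

Lemma Ok_weak j k f : (j <= k)%nat -> Ok k f -> Ok j f.
Proof.
  intros Hjk [a [D [Ha H]]]. pose proof (Ok_Dpos _ _ _ _ Ha H) as HD.
  exists (Rmin a 1), D. split. apply Rmin_glb_lt; lra.
  intros u [Hu Hu']. pose proof (Rmin_l a 1). pose proof (Rmin_r a 1).
  eapply Rle_trans. apply H; lra. apply Rmult_le_compat_l; auto. apply pow_le_1; auto; lra.
Qed.

Lemma Ok_const c : Ok 0 (fun _ => c).
Proof. exists 1, (Rabs c). split. lra. intros; simpl; lra. Qed.

Lemma Ok_pow n : Ok n (fun u => u^n).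
Proof. exists 1, 1. split. lra. intros u Hu. rewrite Rabs_right. lra.
  apply Rle_ge, pow_le; lra. Qed.

Lemma Ok_small f : Ok 2 f -> forall c, 0 < c -> exists u1, 0 < u1 /\ forall u, 0 < u <= u1 -> Rabs (f u) <= c * u.
Proof.
  intros [a [D [Ha H]]] c Hc. pose proof (Ok_Dpos _ _ _ _ Ha H) as HD.
  exists (Rmin a (c / (D+1))). split. apply Rmin_glb_lt; auto. apply Rdiv_lt_0_compat; lra.
  intros u [Hu Hu']. pose proof (Rmin_l a (c/(D+1))). pose proof (Rmin_r a (c/(D+1))).
  eapply Rle_trans. apply H; lra.
  assert (u * (D+1) <= c). { assert (c/(D+1)*(D+1) = c) by (field; lra).
    assert (u * (D+1) <= c/(D+1)*(D+1)) by (apply Rmult_le_compat_r; lra). lra. }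
  simpl. nra.
Qed.

Lemma Ok_contra K : Ok 6 (fun u => K * u^4) -> K = 0.
Proof.
  intros [a [D [Ha H]]]. pose proof (Ok_Dpos _ _ _ _ Ha H) as HD.
  destruct (Req_dec K 0) as [|HK]; auto. exfalso.
  assert (HK' : 0 < Rabs K) by (apply Rabs_pos_lt; auto).
  set (u := Rmin (Rmin a 1) (Rabs K / (2*(D+1)))).
  assert (Hu : 0 < u). { unfold u. repeat apply Rmin_glb_lt; try lra. apply Rdiv_lt_0_compat; lra. }
  assert (Hu1 : u <= a). { unfold u. eapply Rle_trans. apply Rmin_l. apply Rmin_l. }
  assert (Hu2 : u <= 1). { unfold u. eapply Rle_trans. apply Rmin_l. apply Rmin_r. }
  assert (Hu3 : u * (2*(D+1)) <= Rabs K). { assert (u <= Rabs K / (2*(D+1))) by apply Rmin_r.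
    assert (Rabs K/(2*(D+1))*(2*(D+1)) = Rabs K) by (field; lra).
    assert (u * (2*(D+1)) <= Rabs K/(2*(D+1))*(2*(D+1))) by (apply Rmult_le_compat_r; lra). lra. }
  specialize (H u ltac:(lra)). rewrite Rabs_mult, (Rabs_right (u^4)) in H by (apply Rle_ge, pow_le; lra).
  assert (0 < u^4) by (apply pow_lt; lra).
  replace (u^6) with (u^4 * (u*u)) in H by ring.
  assert (Rabs K <= D * (u*u)) by nra.
  assert (u*u <= u) by nra. nra.
Qed.

Lemma Rabs_le_inv a b : Rabs a <= b -> -b <= a <= b.
Proof. intros H; split; [pose proof (Rle_abs (-a)) as H0; rewrite Rabs_Ropp in H0|pose proof (Rle_abs a)]; lra. Qed.

Definition LL (F : R -> R) x y := (x+y)/2 + F ((y-x)/2).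

Section Core.
Variables (F : R -> R) (al be C d0 : R).
Hypothesis Hd0 : 0 < d0.
Hypothesis HF : forall v, Rabs v <= d0 -> Rabs (F v - (al*v^2 + be*v^4)) <= C * v^6.
Let P v := al*v^2 + be*v^4.

Lemma Ok_comp g : (exists u1, 0 < u1 /\ forall u, 0 < u <= u1 -> Rabs (g u) <= u) ->
  Ok 6 (fun u => F (g u) - P (g u)).
Proof.
  intros [u1 [Hu1 Hg]]. exists (Rmin u1 d0), (Rabs C). split. apply Rmin_glb_lt; auto.
  intros u [Hu Hu']. pose proof (Rmin_l u1 d0). pose proof (Rmin_r u1 d0).
  specialize (Hg u ltac:(lra)).
  eapply Rle_trans. apply HF. lra.
  assert (g u ^ 6 <= u^6). { replace (g u ^6) with (Rabs (g u) ^ 6).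
     apply pow_incr. split; auto. apply Rabs_pos.
     replace 6%nat with (2*3)%nat by lia. rewrite !pow_mult. f_equal. apply pow2_abs. }
  assert (0 <= g u ^ 6) by (replace 6%nat with (2*3)%nat by lia; rewrite pow_mult; apply pow_le, pow2_ge_0).
  pose proof (Rle_abs C). pose proof (Rabs_pos C). nra.
Qed.


Lemma Ok_sub k f g : Ok k f -> Ok k g -> Ok k (fun u => f u - g u).
Proof. intros H1 H2. apply (Ok_ext k (fun u => f u + (-1) * g u)). intros; ring.
  apply Ok_add; auto. apply Ok_scal; auto. Qed.

Definition Rx (u m f1 f2 f3 : R) :=
  let dl := (f2 - f1)/2 in
  let q := m - al*(u*u) in
  /2 * (m - P u)
 + (-(al/4)) * (q * (m + al * (u*u)))
 + (-(be/16)) * (6 * ((u*u) * (m * m)) + (m * m) * (m * m))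
 + (-al) * (u * (dl + al * m * u / 2))
 + (al^2/2) * ((u*u) * q)
 + (-al) * (dl * dl)
 + (-be) * (dl * ((u + dl) * ((/2*u + dl)*(/2*u+dl) + /4*(u*u))))
 + (-/2) * ((f1 - P ((m - - u)/2)) + (f2 - P ((u - m)/2)))
 + (-1) * (f3 - P ((((m+u)/2 + f2) - ((-u+m)/2 + f1))/2)).

Lemma Rx_ident u m f1 f2 f3 :
  Rx u m f1 f2 f3 = (m - ((( -u+m)/2+f1 + ((m+u)/2+f2))/2 + f3)) - (3*be+2*al^3)/8*u^4.
Proof. unfold Rx, P. field. Qed.

Hypothesis Hst : forall u, 0 < u -> F u = LL F (LL F (-u) (F u)) (LL F (F u) u).

Theorem core : 3*be + 2*al^3 = 0.
Proof.
  set (w1 := fun u => (F u - - u)/2). set (w2 := fun u => (u - F u)/2).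
  set (dl := fun u => (F (w2 u) - F (w1 u))/2).
  set (g3 := fun u => (((F u+u)/2 + F (w2 u)) - ((-u+F u)/2 + F (w1 u)))/2).
  assert (On : Ok 6 (fun u => F u - P u)).
  { apply (Ok_comp (fun u => u)). exists 1. split. lra. intros u Hu. rewrite Rabs_right; lra. }
  assert (Om : Ok 2 F).
  { apply (Ok_ext 2 (fun u => (F u - P u) + (al * u^2 + be * u^4))). intros; unfold P; ring.
    apply Ok_add. apply (Ok_weak 2 6); auto. apply Ok_add. apply Ok_scal, Ok_pow.
    apply Ok_scal. apply (Ok_weak 2 4). lia. apply Ok_pow. }
  assert (Ouu : Ok 2 (fun u => u*u)).
  { apply (Ok_ext 2 (fun u => u^2)). intros; ring. apply Ok_pow. }
  assert (Omm : Ok 4 (fun u => F u * F u)). { apply (Ok_mul 2 2); auto. }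
  assert (Oq : Ok 4 (fun u => F u - al*(u*u))).
  { apply (Ok_ext 4 (fun u => (F u - P u) + be * u^4)). intros; unfold P; ring.
    apply Ok_add. apply (Ok_weak 4 6); auto. apply Ok_scal, Ok_pow. }
  destruct (Ok_small _ Om 1 ltac:(lra)) as [u1 [Hu1 Hsm]].
  assert (OE1 : Ok 6 (fun u => F (w1 u) - P (w1 u))).
  { apply Ok_comp. exists u1. split; auto. intros u Hu. specialize (Hsm u Hu). unfold w1.
    apply Rabs_le. apply Rabs_le_inv in Hsm. lra. }
  assert (OE2 : Ok 6 (fun u => F (w2 u) - P (w2 u))).
  { apply Ok_comp. exists u1. split; auto. intros u Hu. specialize (Hsm u Hu). unfold w2.
    apply Rabs_le. apply Rabs_le_inv in Hsm. lra. }
  assert (Odl2 : Ok 5 (fun u => dl u + al * F u * u / 2)).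
  { apply (Ok_ext 5 (fun u => (-(be/4)) * (F u * (u * (u*u + F u * F u))) + /2 * ((F (w2 u) - P (w2 u)) - (F (w1 u) - P (w1 u))))).
    intros; unfold dl, w1, w2, P; field.
    apply Ok_add. apply Ok_scal. apply (Ok_mul 2 3); auto. apply (Ok_mul 1 2); auto.
    apply (Ok_ext 1 (fun u => u^1)). intros; ring. apply Ok_pow.
    apply Ok_add; auto. apply (Ok_weak 2 4); auto.
    apply Ok_scal. apply (Ok_weak 5 6); auto. apply Ok_sub; auto. }
  assert (Odl : Ok 3 dl).
  { apply (Ok_ext 3 (fun u => (dl u + al * F u * u / 2) + (-(al/2)) * (F u * u))).
    intros; field. apply Ok_add. apply (Ok_weak 3 5); auto.
    apply Ok_scal. apply (Ok_mul 2 1); auto.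
    apply (Ok_ext 1 (fun u => u^1)). intros; ring. apply Ok_pow. }
  assert (Ou : Ok 1 (fun u => u)). { apply (Ok_ext 1 (fun u => u^1)). intros; ring. apply Ok_pow. }
  destruct (Ok_small _ (Ok_weak 2 3 _ ltac:(lia) Odl) (/2) ltac:(lra)) as [u2 [Hu2 Hsd]].
  assert (OE3 : Ok 6 (fun u => F (g3 u) - P (g3 u))).
  { apply Ok_comp. exists u2. split; auto. intros u Hu. specialize (Hsd u Hu).
    replace (g3 u) with (/2*u + dl u) by (unfold g3, dl; field).
    apply Rabs_le. apply Rabs_le_inv in Hsd. lra. }
  set (K := 3*be + 2*al^3).
  assert (OR : Ok 6 (fun u => Rx u (F u) (F (w1 u)) (F (w2 u)) (F (g3 u)))).
  { unfold Rx.
    repeat apply Ok_add.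
    - apply Ok_scal. exact On.
    - apply Ok_scal. apply (Ok_mul 4 2); auto. apply Ok_add; auto. apply Ok_scal; auto.
    - apply Ok_scal. apply Ok_add. apply Ok_scal. apply (Ok_mul 2 4); auto.
      apply (Ok_weak 6 8). lia. apply (Ok_mul 4 4); auto.
    - apply Ok_scal. apply (Ok_mul 1 5); auto.
    - apply Ok_scal. apply (Ok_mul 2 4); auto.
    - apply Ok_scal. apply (Ok_mul 3 3); auto.
    - apply Ok_scal. apply (Ok_mul 3 3); auto. apply (Ok_mul 1 2); auto.
      apply Ok_add; auto. apply (Ok_weak 1 3); auto.
      apply Ok_add. apply (Ok_mul 1 1); auto; apply Ok_add; auto; try (apply Ok_scal; auto);
      apply (Ok_weak 1 3); auto.
      apply Ok_scal; auto.
    - apply Ok_scal. apply Ok_add; auto.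
    - apply Ok_scal. exact OE3. }
  assert (HK : (-(K/8)) = 0).
  { apply Ok_contra. eapply Ok_ext; [|exact OR]. intros u Hu. simpl.
    rewrite Rx_ident. pose proof (Hst u Hu) as H. unfold LL in H.
    unfold g3, w1, w2. cbv beta. fold K. rewrite <- H. ring. }
  lra.
Qed.

End Core.

Lemma mono0 (f f' : R -> R) X : (forall x, 0 <= x <= X -> is_derive f x (f' x)) -> f 0 = 0 ->
  (forall x, 0 <= x <= X -> 0 <= f' x) -> forall x, 0 <= x <= X -> 0 <= f x.
Proof.
  intros Hd H0 Hp x Hx. destruct (Req_dec x 0) as [->|Hx0]. lra.
  destruct (MVT_cor2 f f' 0 x) as [c [Hc1 Hc2]]. lra.
  intros c Hc. apply is_derive_Reals. apply Hd. lra.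
  assert (0 <= f' c) by (apply Hp; lra). nra.
Qed.

Lemma cmp (f f' G G' : R -> R) X :
  (forall x, 0 <= x <= X -> is_derive f x (f' x)) ->
  (forall x, 0 <= x <= X -> is_derive G x (G' x)) -> f 0 = 0 -> G 0 = 0 ->
  (forall x, 0 <= x <= X -> 0 <= f' x <= G' x) -> forall x, 0 <= x <= X -> 0 <= f x <= G x.
Proof.
  intros Hf HG H0 G0 Hb x Hx. split.
  apply (mono0 f f' X); auto. intros; apply Hb; auto.
  assert (0 <= G x - f x). { apply (mono0 (fun x => G x - f x) (fun x => G' x - f' x) X); auto.
    intros. apply @is_derive_minus; auto. lra. intros y Hy; specialize (Hb y Hy); lra. } lra.
Qed.

Lemma exp_le_exp x y : x <= y -> exp x <= exp y.
Proof. intros H. destruct (Req_dec x y) as [->|]. lra. left; apply exp_increasing; lra. Qed.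

Definition sh z := (exp z - exp (-z))/2.
Definition ch z := (exp z + exp (-z))/2.

Lemma ch_b x : 0 <= x <= 1 -> 0 <= ch x <= 2.
Proof. intros Hx. unfold ch. pose proof (exp_pos x). pose proof (exp_pos (-x)).
  assert (exp x <= exp 1) by (apply exp_le_exp; lra). pose proof exp_le_3.
  assert (exp (-x) <= 1) by (rewrite <- exp_0; apply exp_le_exp; lra). lra. Qed.

Ltac dv := intros; unfold sh, ch; auto_derive; [auto | field].
Ltac z0 := cbv beta; unfold sh, ch; rewrite ?Ropp_0, ?exp_0; simpl; field.

Lemma s1 x : 0 <= x <= 1 -> 0 <= sh x <= 2 * x.
Proof. apply (cmp sh ch (fun x => 2*x) (fun _ => 2) 1); [dv|dv|z0|z0|intros]. apply ch_b; auto. Qed.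

Lemma c2 x : 0 <= x <= 1 -> 0 <= ch x - 1 <= x^2.
Proof. apply (cmp (fun x => ch x - 1) sh (fun x => x^2) (fun x => 2*x) 1); [dv|dv|z0|z0|intros]. apply s1; auto. Qed.

Lemma s3 x : 0 <= x <= 1 -> 0 <= sh x - x <= x^3/3.
Proof. apply (cmp (fun x => sh x - x) (fun x => ch x - 1) (fun x => x^3/3) (fun x => x^2) 1); [dv|dv|z0|z0|intros]. apply c2; auto. Qed.

Lemma c4 x : 0 <= x <= 1 -> 0 <= ch x - 1 - x^2/2 <= x^4/12.
Proof. apply (cmp (fun x => ch x - 1 - x^2/2) (fun x => sh x - x) (fun x => x^4/12) (fun x => x^3/3) 1); [dv|dv|z0|z0|intros]. apply s3; auto. Qed.

Lemma s5 x : 0 <= x <= 1 -> 0 <= sh x - x - x^3/6 <= x^5/60.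
Proof. apply (cmp (fun x => sh x - x - x^3/6) (fun x => ch x - 1 - x^2/2) (fun x => x^5/60) (fun x => x^4/12) 1); [dv|dv|z0|z0|intros]. apply c4; auto. Qed.

Lemma c6 x : 0 <= x <= 1 -> 0 <= ch x - 1 - x^2/2 - x^4/24 <= x^6/360.
Proof. apply (cmp (fun x => ch x - 1 - x^2/2 - x^4/24) (fun x => sh x - x - x^3/6) (fun x => x^6/360) (fun x => x^5/60) 1); [dv|dv|z0|z0|intros]. apply s5; auto. Qed.

Lemma s7 x : 0 <= x <= 1 -> 0 <= sh x - x - x^3/6 - x^5/120 <= x^7/2520.
Proof. apply (cmp (fun x => sh x - x - x^3/6 - x^5/120) (fun x => ch x - 1 - x^2/2 - x^4/24) (fun x => x^7/2520) (fun x => x^6/360) 1); [dv|dv|z0|z0|intros]. apply c6; auto. Qed.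

Lemma ln_b w : 0 <= w -> w - w^2/2 <= ln (1+w) <= w - w^2/2 + w^3/3.
Proof.
  intros Hw. split.
  - assert (0 <= ln (1+w) - (w - w^2/2)); [|lra].
    apply (mono0 (fun x => ln (1+x) - (x - x^2/2)) (fun x => x^2/(1+x)) w); auto.
    intros x Hx. auto_derive. lra. field. lra.
    cbv beta. rewrite Rplus_0_r, ln_1. lra.
    intros x Hx. apply Rdiv_le_0_compat. nra. lra. lra.
  - assert (0 <= (w - w^2/2 + w^3/3) - ln (1+w)); [|lra].
    apply (mono0 (fun x => (x - x^2/2 + x^3/3) - ln (1+x)) (fun x => x^3/(1+x)) w); auto.
    intros x Hx. auto_derive. lra. field. lra.
    cbv beta. rewrite Rplus_0_r, ln_1. lra.
    intros x Hx. apply Rdiv_le_0_compat. simpl. assert (0 <= x*x) by nra. nra. lra. lra.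
Qed.

Definition Sl z := ln (sh z / z).
Definition Tc z := z * ch z / sh z - 1.

Lemma S_b z : 0 < z <= 1 -> Rabs (Sl z - (z^2/6 - z^4/180)) <= z^6.
Proof.
  intros Hz. pose proof (s7 z ltac:(lra)) as H7.
  set (rho := sh z - z - z^3/6 - z^5/120) in *.
  set (t := z^2).
  assert (Ht : 0 < t <= 1). { unfold t. split. apply pow_lt; lra. simpl. nra. }
  set (r' := rho / z).
  assert (Hr : 0 <= r' <= t^3/2520).
  { unfold r', t. split. apply Rdiv_le_0_compat; lra.
    apply (Rmult_le_reg_r z). lra. unfold Rdiv at 1. rewrite Rmult_assoc, Rinv_l by lra.
    replace ((z^2)^3/2520*z) with (z^7/2520) by field. lra. }
  set (h := t^2/120 + r').
  assert (Hh : 0 <= h <= t^2/100).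
  { unfold h. split. assert (0 <= t^2) by (apply pow_le; lra). lra.
    assert (t^3 <= t^2) by (simpl; nra). lra. }
  set (w := t/6 + h).
  assert (Hw : sh z / z = 1 + w).
  { unfold w, h, r', t, rho. field. lra. }
  assert (Hw0 : 0 <= w <= t/5). { unfold w. split. lra. assert (t^2 <= t) by (simpl; nra). lra. }
  unfold Sl. rewrite Hw. pose proof (ln_b w ltac:(lra)) as [L1 L2].
  set (th := ln (1+w) - (w - w^2/2)).
  assert (Hth : 0 <= th <= t^3/375).
  { unfold th. split. lra. assert (w^3 <= (t/5)^3) by (apply pow_incr; lra).
    assert ((t/5)^3 = t^3/125) by field. lra. }
  assert (E : ln (1+w) - (t/6 - z^4/180) = r' - t*h/6 - h^2/2 + th).
  { unfold th. replace (z^4) with (t^2) by (unfold t; ring). fold t. unfold w, h. field. }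
  rewrite E. replace (z^6) with (t^3) by (unfold t; ring).
  assert (0 <= t*h <= t^3/100). { split. nra. replace (t^3) with (t*t^2) by field. nra. }
  assert (0 <= h^2 <= t^3/10000). { split. apply pow2_ge_0.
    assert (h^2 <= (t^2/100)^2) by (apply pow_incr; lra).
    assert (t^4 <= t^3) by (simpl; assert (0 <= t*t*t) by (apply Rmult_le_pos; nra); nra).
    assert ((t^2/100)^2 = t^4/10000) by field. lra. }
  assert (0 < t^3) by (apply pow_lt; lra).
  apply Rabs_le. split; lra.
Qed.

Lemma T_b z : 0 < z <= 1 -> Rabs (Tc z - (z^2/3 - z^4/45)) <= z^6.
Proof.
  intros Hz. pose proof (s7 z ltac:(lra)) as H7. pose proof (c6 z ltac:(lra)) as H6.
  pose proof (s3 z ltac:(lra)) as H3.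
  set (rho := sh z - z - z^3/6 - z^5/120) in *.
  set (ga := ch z - 1 - z^2/2 - z^4/24) in *.
  assert (Hsh : z <= sh z) by lra.
  set (N := z * ch z - sh z * (1 + z^2/3 - z^4/45)).
  assert (E : Tc z - (z^2/3 - z^4/45) = N / sh z). { unfold Tc, N. field. lra. }
  assert (EN : N = z*ga + z^7/1080 + z^9/5400 - rho*(1 + z^2/3 - z^4/45)).
  { unfold N, ga, rho. field. }
  assert (Hz2 : 0 < z^2 <= 1) by (split; [apply pow_lt; lra| simpl; nra]).
  assert (Hz4 : 0 < z^4 <= z^2) by (split; [apply pow_lt; lra| simpl; nra]).
  assert (1 <= 1 + z^2/3 - z^4/45 <= 2) by lra.
  assert (0 <= rho*(1 + z^2/3 - z^4/45) <= z^7/1260) by (split; nra).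
  assert (0 <= z*ga <= z^7/360). { split. nra. replace (z^7) with (z*z^6) by field. nra. }
  assert (0 <= z^9 <= z^7). { split. apply pow_le; lra. replace (z^9) with (z^7*z^2) by field.
    assert (0 < z^7) by (apply pow_lt; lra). nra. }
  assert (0 < z^7) by (apply pow_lt; lra).
  assert (HN : Rabs N <= z^7/100). { rewrite EN. apply Rabs_le. split; lra. }
  rewrite E. unfold Rdiv. rewrite Rabs_mult, Rabs_inv, (Rabs_right (sh z)) by lra.
  apply (Rmult_le_reg_r (sh z)). lra. rewrite Rmult_assoc, Rinv_l by lra.
  assert (0 < z^6) by (apply pow_lt; lra).
  replace (z^7) with (z^6*z) in HN by field. nra.
Qed.

Lemma sh_neg z : sh (-z) = - sh z.
Proof. unfold sh. rewrite Ropp_involutive. field. Qed.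
Lemma ch_neg z : ch (-z) = ch z.
Proof. unfold ch. rewrite Ropp_involutive. field. Qed.
Lemma sh_pos z : 0 < z -> 0 < sh z.
Proof. intros. unfold sh. assert (exp (-z) < exp z) by (apply exp_increasing; lra). lra. Qed.
Lemma sig_pos z : z <> 0 -> 0 < sh z / z.
Proof. intros Hz. destruct (Rlt_dec 0 z). apply Rdiv_lt_0_compat; auto. apply sh_pos; auto.
  replace (sh z / z) with (sh (-z) / (-z)) by (rewrite sh_neg; field; auto).
  apply Rdiv_lt_0_compat; try lra. apply sh_pos; lra. Qed.
Lemma sh_nz z : z <> 0 -> sh z <> 0.
Proof. intros Hz H. pose proof (sig_pos z Hz). rewrite H in H0. unfold Rdiv in H0. lra. Qed.

Lemma ln0 : ln 0 = 0.
Proof. unfold ln. destruct (Rlt_dec 0 0) as [H|H]; [exfalso; apply (Rlt_irrefl 0); exact H | reflexivity]. Qed.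
Lemma S0 : Sl 0 = 0.
Proof. unfold Sl, sh. rewrite Ropp_0. replace ((exp 0 - exp 0) / 2 / 0) with 0. apply ln0.
  unfold Rdiv. rewrite Rminus_diag. rewrite !Rmult_0_l. reflexivity. Qed.
Lemma S_even z : Sl (-z) = Sl z.
Proof. destruct (Req_dec z 0) as [->|]. rewrite Ropp_0; auto.
  unfold Sl. rewrite sh_neg. f_equal. field. auto. Qed.
Lemma T_even z : z <> 0 -> Tc (-z) = Tc z.
Proof. intros. unfold Tc. rewrite sh_neg, ch_neg. field. apply sh_nz; auto. Qed.

Lemma S_b' z : Rabs z <= 1 -> Rabs (Sl z - (z^2/6 - z^4/180)) <= z^6.
Proof.
  intros Hz. destruct (Rtotal_order z 0) as [H|[H|H]].
  - rewrite <- S_even. replace (z^2) with ((-z)^2) by field. replace (z^4) with ((-z)^4) by field.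
    replace (z^6) with ((-z)^6) by field. apply S_b. rewrite Rabs_left in Hz; lra.
  - subst. rewrite S0. simpl. rewrite Rabs_R0 || idtac. replace (0 - _) with 0 by field. rewrite Rabs_R0. lra.
  - apply S_b. rewrite Rabs_right in Hz; lra.
Qed.

Lemma T_b' z : z <> 0 -> Rabs z <= 1 -> Rabs (Tc z - (z^2/3 - z^4/45)) <= z^6.
Proof.
  intros Hz0 Hz. destruct (Rtotal_order z 0) as [H|[H|H]].
  - rewrite <- T_even by auto. replace (z^2) with ((-z)^2) by field. replace (z^4) with ((-z)^4) by field.
    replace (z^6) with ((-z)^6) by field. apply T_b. rewrite Rabs_left in Hz; lra.
  - contradiction.
  - apply T_b. rewrite Rabs_right in Hz; lra.
Qed.

Definition Fp (p r v : R) : R :=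
  if Req_EM_T v 0 then 0 else if Req_EM_T p r then Tc (r*v)/r else (Sl (p*v) - Sl (r*v))/(p-r).

Lemma small_mul a v p r : (Rabs a <= Rabs p \/ Rabs a <= Rabs r) -> Rabs v <= /(1+Rabs p+Rabs r) -> Rabs (a*v) <= 1.
Proof.
  intros Ha Hv. pose proof (Rabs_pos p). pose proof (Rabs_pos r). pose proof (Rabs_pos a).
  pose proof (Rabs_pos v). rewrite Rabs_mult.
  assert (Hi : /(1+Rabs p+Rabs r) * (1+Rabs p+Rabs r) = 1) by (field; lra).
  assert (Rabs a <= 1+Rabs p+Rabs r) by lra.
  assert (Rabs a * Rabs v <= (1+Rabs p+Rabs r) * /(1+Rabs p+Rabs r)) by (apply Rmult_le_compat; lra).
  lra.
Qed.

Lemma abs_sub_le a b : Rabs (a - b) <= Rabs a + Rabs b.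
Proof. unfold Rminus. eapply Rle_trans. apply Rabs_triang. rewrite Rabs_Ropp. lra. Qed.

Lemma F_bound p r : (p = r -> r <> 0) -> exists C, forall v, Rabs v <= /(1+Rabs p+Rabs r) ->
  Rabs (Fp p r v - ((p+r)/6*v^2 + (-(p+r)*(p^2+r^2)/180)*v^4)) <= C * v^6.
Proof.
  intros Hpr. destruct (Req_EM_T p r) as [Ep|Ep].
  - subst p. specialize (Hpr eq_refl). exists (r^6/Rabs r). intros v Hv. unfold Fp.
    destruct (Req_EM_T v 0) as [->|Hv0].
    + match goal with |- Rabs ?e <= _ => replace e with 0 by field end. rewrite Rabs_R0. replace (0^6) with 0 by field. lra.
    + destruct (Req_EM_T r r) as [_|]; [|tauto].
      pose proof (T_b' (r*v) ltac:(apply Rmult_integral_contrapositive; tauto)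
         (small_mul r v r r (or_intror (Rle_refl _)) Hv)) as H.
      replace (Tc (r * v) / r - ((r + r) / 6 * v ^ 2 + - (r + r) * (r ^ 2 + r ^ 2) / 180 * v ^ 4))
        with ((Tc (r*v) - ((r*v)^2/3 - (r*v)^4/45))/r) by (field; auto).
      unfold Rdiv. rewrite Rabs_mult, Rabs_inv. assert (0 < Rabs r) by (apply Rabs_pos_lt; auto).
      replace (r^6 * /Rabs r * v^6) with ((r*v)^6 * / Rabs r) by (field; lra).
      apply Rmult_le_compat_r. left; apply Rinv_0_lt_compat; auto. auto.
  - exists ((p^6+r^6)/Rabs (p-r)). intros v Hv. unfold Fp.
    destruct (Req_EM_T v 0) as [->|Hv0].
    + match goal with |- Rabs ?e <= _ => replace e with 0 by field end. rewrite Rabs_R0. replace (0^6) with 0 by field. lra.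
    + destruct (Req_EM_T p r) as [|_]; [tauto|].
      pose proof (S_b' (p*v) (small_mul p v p r (or_introl (Rle_refl _)) Hv)) as H1.
      pose proof (S_b' (r*v) (small_mul r v p r (or_intror (Rle_refl _)) Hv)) as H2.
      assert (Hpr0 : p - r <> 0) by lra.
      replace ((Sl (p * v) - Sl (r * v)) / (p - r) - ((p + r) / 6 * v ^ 2 + - (p + r) * (p ^ 2 + r ^ 2) / 180 * v ^ 4))
        with (((Sl (p*v) - ((p*v)^2/6 - (p*v)^4/180)) - (Sl (r*v) - ((r*v)^2/6 - (r*v)^4/180)))/(p-r)) by (field; auto).
      unfold Rdiv. rewrite Rabs_mult, Rabs_inv. assert (0 < Rabs (p-r)) by (apply Rabs_pos_lt; auto).
      replace ((p^6+r^6) * /Rabs (p-r) * v^6) with (((p*v)^6 + (r*v)^6) * / Rabs (p-r)) by (field; lra).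
      apply Rmult_le_compat_r. left; apply Rinv_0_lt_compat; auto.
      eapply Rle_trans. apply abs_sub_le. unfold Rdiv in H1, H2. lra.
Qed.

Lemma Rpow_exp a b : Rpower (exp a) b = exp (b*a).
Proof. unfold Rpower. rewrite ln_exp. auto. Qed.

Lemma exp_diff k x y : exp (k*y) - exp (k*x) = 2 * exp (k*((x+y)/2)) * sh (k*((y-x)/2)).
Proof.
  unfold sh. replace (k*y) with (k*((x+y)/2) + k*((y-x)/2)) by field.
  replace (k*x) with (k*((x+y)/2) + -(k*((y-x)/2))) by field. rewrite !exp_plus. field.
Qed.

Lemma stol_exp p r x y : (p = r -> r <> 0) ->
  stolarsky p r (exp x) (exp y) = exp ((x+y)/2 + Fp p r ((y-x)/2)).
Proof.
  intros Hpr. unfold stolarsky, Fp.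
  destruct (Req_EM_T (exp x) (exp y)) as [E|E].
  { apply exp_inv in E. subst. replace ((y-y)/2) with 0 by field.
    destruct (Req_EM_T 0 0) as [_|]; [|tauto]. f_equal. field. }
  assert (Hv : (y-x)/2 <> 0). { intro H. apply E. f_equal. lra. }
  assert (Hyx : y - x <> 0) by lra.
  destruct (Req_EM_T ((y-x)/2) 0) as [|_]; [tauto|].
  destruct (Req_EM_T p 0) as [Hp|Hp]; destruct (Req_EM_T r 0) as [Hr|Hr].
  - subst. exfalso. apply (Hpr eq_refl). auto.
  - subst p. destruct (Req_EM_T 0 r) as [|_]. subst; tauto.
    rewrite !Rpow_exp, !ln_exp, exp_diff.
    assert (Hrv : r * ((y-x)/2) <> 0) by (apply Rmult_integral_contrapositive; tauto).
    replace (2 * exp (r * ((x + y) / 2)) * sh (r * ((y - x) / 2)) / (r * (y - x)))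
      with (exp (r * ((x + y) / 2)) * (sh (r * ((y - x) / 2)) / (r * ((y-x)/2)))) by (field; tauto).
    unfold Rpower. rewrite ln_mult, ln_exp by (apply exp_pos || apply sig_pos; auto).
    rewrite Rmult_0_l, S0. unfold Sl. f_equal. field. auto.
  - subst r. destruct (Req_EM_T p 0) as [|_]. tauto.
    rewrite !Rpow_exp, !ln_exp, exp_diff.
    assert (Hrv : p * ((y-x)/2) <> 0) by (apply Rmult_integral_contrapositive; tauto).
    replace (2 * exp (p * ((x + y) / 2)) * sh (p * ((y - x) / 2)) / (p * (y - x)))
      with (exp (p * ((x + y) / 2)) * (sh (p * ((y - x) / 2)) / (p * ((y-x)/2)))) by (field; tauto).
    unfold Rpower. rewrite ln_mult, ln_exp by (apply exp_pos || apply sig_pos; auto).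
    rewrite Rmult_0_l, S0. unfold Sl. f_equal. field. auto.
  - destruct (Req_EM_T p r) as [Epr|Epr].
    + subst p. rewrite !Rpow_exp.
      set (v := (y-x)/2). set (c := (x+y)/2).
      replace (exp (exp (r * y) * y) / exp (exp (r * x) * x)) with (exp (exp (r*y)*y - exp (r*x)*x))
        by (unfold Rminus; rewrite exp_plus, exp_Ropp; field; apply Rgt_not_eq, exp_pos).
      rewrite Rpow_exp, <- exp_plus. f_equal.
      assert (Hrv : r * v <> 0) by (apply Rmult_integral_contrapositive; tauto).
      pose proof (sh_nz _ Hrv) as Hsh.
      unfold Tc, sh, ch in *.
      replace (r*y) with (r*c + r*v) by (unfold c, v; field).
      replace (r*x) with (r*c + -(r*v)) by (unfold c, v; field).
      rewrite !exp_plus.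
      assert (y = c + v) by (unfold c, v; field). assert (x = c - v) by (unfold c, v; field).
      rewrite H, H0. clear H H0.
      assert (exp (r*v) - exp (-(r*v)) <> 0) by lra.
      pose proof (exp_pos (r*c)).
      field. repeat split; try lra; auto.
      intro Hc. apply H. apply (Rmult_eq_reg_l (exp (r*c))). lra. lra.
    + rewrite !Rpow_exp, !exp_diff.
      assert (Hrv : r * ((y-x)/2) <> 0) by (apply Rmult_integral_contrapositive; tauto).
      assert (Hpv : p * ((y-x)/2) <> 0) by (apply Rmult_integral_contrapositive; tauto).
      pose proof (sh_nz _ Hrv). pose proof (exp_pos (r * ((x+y)/2))).
      replace (r * (2 * exp (p * ((x + y) / 2)) * sh (p * ((y - x) / 2))) /
        (p * (2 * exp (r * ((x + y) / 2)) * sh (r * ((y - x) / 2)))))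
      with (exp ((p-r) * ((x+y)/2)) * ((sh (p * ((y - x) / 2)) / (p * ((y-x)/2))) / (sh (r * ((y - x) / 2)) / (r * ((y-x)/2))))).
      2:{ replace ((p-r) * ((x+y)/2)) with (p * ((x+y)/2) + - (r * ((x+y)/2))) by ring.
          rewrite exp_plus, exp_Ropp. field. repeat split; auto; lra. }
      unfold Rpower. rewrite ln_mult, ln_exp, ln_div by (apply exp_pos || apply sig_pos || (apply Rdiv_lt_0_compat; apply sig_pos); auto).
      unfold Sl. f_equal. field. lra.
Qed.

Lemma stable_ext (M N : R -> R -> R) : (forall s t, 0 < s -> 0 < t -> M s t = N s t) ->
  (forall s t, 0 < s -> 0 < t -> 0 < N s t) -> stable N -> stable M.
Proof.
  intros E P H s t Hs Ht. rewrite (E s t Hs Ht). assert (Hm := P s t Hs Ht).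
  rewrite (E s (N s t) Hs Hm), (E (N s t) t Hm Ht).
  rewrite (E _ _ (P _ _ Hs Hm) (P _ _ Hm Ht)). apply H; auto.
Qed.

Definition B r s t := Rpower ((Rpower s r + Rpower t r)/2) (1/r).
Definition G s t := sqrt (s*t).

Lemma Rpower_pos a b : 0 < Rpower a b.
Proof. unfold Rpower. apply exp_pos. Qed.

Lemma Rpow_inv a r : 0 < a -> r <> 0 -> Rpower (Rpower a (1/r)) r = a.
Proof. intros. rewrite Rpower_mult. replace (1/r*r) with 1 by (field; auto). apply Rpower_1; auto. Qed.
Lemma Rpow_inv' a r : 0 < a -> r <> 0 -> Rpower (Rpower a r) (1/r) = a.
Proof. intros. rewrite Rpower_mult. replace (r*(1/r)) with 1 by (field; auto). apply Rpower_1; auto. Qed.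

Lemma B_pos r s t : 0 < B r s t.
Proof. apply Rpower_pos. Qed.

Lemma B_pow r s t : r <> 0 -> Rpower (B r s t) r = (Rpower s r + Rpower t r)/2.
Proof. intros. unfold B. apply Rpow_inv; auto. pose proof (Rpower_pos s r). pose proof (Rpower_pos t r). lra. Qed.

Lemma B_stable r : r <> 0 -> stable (B r).
Proof.
  intros Hr s t Hs Ht. set (m := B r s t).
  assert (Hm : Rpower m r = (Rpower s r + Rpower t r)/2) by (apply B_pow; auto).
  assert (E : Rpower (B r (B r s m) (B r m t)) r = Rpower m r).
  { rewrite (B_pow r (B r s m) (B r m t) Hr), (B_pow r s m Hr), (B_pow r m t Hr). rewrite Hm. lra. }
  transitivity (Rpower (Rpower m r) (1/r)). symmetry; apply Rpow_inv'; auto; apply B_pos.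
  rewrite <- E. apply Rpow_inv'; auto; apply B_pos.
Qed.

Lemma G_pos s t : 0 < s -> 0 < t -> 0 < G s t.
Proof. intros. unfold G. apply sqrt_lt_R0. nra. Qed.

Lemma G_stable : stable G.
Proof.
  intros s t Hs Ht. unfold G. set (m := sqrt (s*t)).
  assert (Hm : 0 < m) by (apply sqrt_lt_R0; nra).
  assert (Hmm : m * m = s * t) by (apply sqrt_sqrt; nra).
  rewrite <- sqrt_mult by nra.
  assert (Hq : s * m * (m * t) = (m*m)*(m*m)) by (replace (s*m*(m*t)) with ((s*t)*(m*m)) by ring; rewrite Hmm; ring).
  rewrite Hq.
  rewrite sqrt_square by nra. unfold m. rewrite sqrt_square; auto. left; apply sqrt_lt_R0; nra.
Qed.

Lemma Rpower_inj s t r : 0 < s -> 0 < t -> r <> 0 -> Rpower s r = Rpower t r -> s = t.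
Proof. intros Hs Ht Hr E. unfold Rpower in E. apply exp_inv in E. apply ln_inv; auto.
  apply (Rmult_eq_reg_l r); auto. Qed.

Lemma B_diag r s : 0 < s -> r <> 0 -> B r s s = s.
Proof. intros. unfold B. replace ((Rpower s r + Rpower s r)/2) with (Rpower s r) by field.
  apply Rpow_inv'; auto. Qed.

Lemma G_diag s : 0 < s -> G s s = s.
Proof. intros. unfold G. apply sqrt_square. lra. Qed.

Lemma stol00 s t : 0 < s -> 0 < t -> stolarsky 0 0 s t = G s t.
Proof. intros. unfold stolarsky. destruct (Req_EM_T s t) as [->|]. rewrite G_diag; auto.
  destruct (Req_EM_T 0 0); [|tauto]. reflexivity. Qed.

Lemma stol2r r s t : r <> 0 -> 0 < s -> 0 < t -> stolarsky (2*r) r s t = B r s t.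
Proof.
  intros Hr Hs Ht. unfold stolarsky. destruct (Req_EM_T s t) as [->|Hst]. rewrite B_diag; auto.
  destruct (Req_EM_T (2*r) 0). lra. destruct (Req_EM_T r 0). tauto.
  destruct (Req_EM_T (2*r) r). lra.
  assert (Rpower t r - Rpower s r <> 0). { intro H. apply Hst. symmetry. apply (Rpower_inj t s r); auto. lra. }
  unfold B. replace (2*r) with (r+r) by ring. rewrite !Rpower_plus.
  f_equal. field. split; auto. lra. field. auto.
Qed.

Lemma stol2p p s t : p <> 0 -> 0 < s -> 0 < t -> stolarsky p (2*p) s t = B p s t.
Proof.
  intros Hr Hs Ht. unfold stolarsky. destruct (Req_EM_T s t) as [->|Hst]. rewrite B_diag; auto.
  destruct (Req_EM_T p 0). tauto. destruct (Req_EM_T (2*p) 0). lra.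
  destruct (Req_EM_T p (2*p)). lra.
  assert (Rpower t p - Rpower s p <> 0). { intro H. apply Hst. symmetry. apply (Rpower_inj t s p); auto. lra. }
  pose proof (Rpower_pos t p). pose proof (Rpower_pos s p).
  assert (H2 : Rpower t p * Rpower t p - Rpower s p * Rpower s p <> 0).
  { replace (Rpower t p * Rpower t p - Rpower s p * Rpower s p) with ((Rpower t p - Rpower s p)*(Rpower t p + Rpower s p)) by ring.
    apply Rmult_integral_contrapositive. split; auto; lra. }
  unfold B. replace (2*p) with (p+p) by ring. rewrite !Rpower_plus.
  replace ((p + p) * (Rpower t p - Rpower s p) / (p * (Rpower t p * Rpower t p - Rpower s p * Rpower s p)))
    with (/ ((Rpower s p + Rpower t p)/2)) by (field; repeat split; auto; lra).
  replace (1 / (p - (p+p))) with (- (1/p)) by (field; auto; lra).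
  set (X := Rpower s p). set (Y := Rpower t p). unfold Rpower. rewrite ln_Rinv by (unfold X, Y; lra). f_equal. field. auto.
Qed.

Lemma stolneg r s t : r <> 0 -> 0 < s -> 0 < t -> stolarsky (-r) r s t = G s t.
Proof.
  intros Hr Hs Ht. unfold stolarsky. destruct (Req_EM_T s t) as [->|Hst]. rewrite G_diag; auto.
  destruct (Req_EM_T (-r) 0). lra. destruct (Req_EM_T r 0). tauto.
  destruct (Req_EM_T (-r) r). lra.
  assert (Rpower t r - Rpower s r <> 0). { intro H. apply Hst. symmetry. apply (Rpower_inj t s r); auto. lra. }
  pose proof (Rpower_pos t r). pose proof (Rpower_pos s r).
  rewrite !Rpower_Ropp.
  replace (r * (/ Rpower t r - / Rpower s r) / (- r * (Rpower t r - Rpower s r)))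
    with (/ (Rpower s r * Rpower t r)) by (field; repeat split; auto; lra).
  unfold G. rewrite <- Rpower_sqrt by nra. unfold Rpower at 1. rewrite ln_Rinv by nra.
  rewrite ln_mult by auto. unfold Rpower. rewrite !ln_exp, ln_mult by auto. f_equal. field. intro; apply Hr; lra.
Qed.

Theorem mainTheorem14 (p r : R) :
  stable (stolarsky p r) <-> (p - 2 * r) * (r - 2 * p) * (p + r) = 0.
Proof.
  split.
  - intros Hst.
    destruct (Req_dec (p + r) 0) as [Hpr|Hpr]. rewrite Hpr; ring.
    assert (Hne : p = r -> r <> 0) by (intros -> ->; apply Hpr; ring).
    destruct (F_bound p r Hne) as [C HC].
    assert (Hd0 : 0 < /(1+Rabs p+Rabs r)). { apply Rinv_0_lt_compat. pose proof (Rabs_pos p); pose proof (Rabs_pos r); lra. }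
    assert (Hst' : forall u, 0 < u -> Fp p r u = LL (Fp p r) (LL (Fp p r) (-u) (Fp p r u)) (LL (Fp p r) (Fp p r u) u)).
    { intros u Hu. pose proof (Hst (exp (-u)) (exp u) (exp_pos _) (exp_pos _)) as H.
      assert (HM : forall x y, stolarsky p r (exp x) (exp y) = exp (LL (Fp p r) x y)) by (intros; apply stol_exp; auto).
      rewrite !HM in H. apply exp_inv in H.
      assert (Lm : LL (Fp p r) (-u) u = Fp p r u).
      { unfold LL. replace ((-u+u)/2) with 0 by field. replace ((u - -u)/2) with u by field. ring. }
      rewrite Lm in H. exact H. }
    pose proof (core (Fp p r) ((p+r)/6) (-(p+r)*(p^2+r^2)/180) C (/(1+Rabs p+Rabs r)) Hd0 HC Hst') as K.
    replace ((p - 2 * r) * (r - 2 * p) * (p + r)) with (270 * (3 * (- (p + r) * (p ^ 2 + r ^ 2) / 180) + 2 * ((p + r) / 6) ^ 3)) by field.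
    rewrite K. ring.
  - intros H. apply Rmult_integral in H. destruct H as [H|H]. apply Rmult_integral in H. destruct H as [H|H].
    + replace p with (2*r) by lra. destruct (Req_dec r 0) as [->|Hr].
      * replace (2*0) with 0 by ring. apply (stable_ext _ G). apply stol00. apply G_pos. apply G_stable.
      * apply (stable_ext _ (B r)). intros; apply stol2r; auto. intros; apply B_pos. apply B_stable; auto.
    + replace r with (2*p) by lra. destruct (Req_dec p 0) as [->|Hr].
      * replace (2*0) with 0 by ring. apply (stable_ext _ G). apply stol00. apply G_pos. apply G_stable.
      * apply (stable_ext _ (B p)). intros; apply stol2p; auto. intros; apply B_pos. apply B_stable; auto.
    + replace p with (-r) by lra. destruct (Req_dec r 0) as [->|Hr].
      * replace (-0) with 0 by ring. apply (stable_ext _ G). apply stol00. apply G_pos. apply G_stable.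
      * apply (stable_ext _ G). intros; apply stolneg; auto. apply G_pos. apply G_stable.
Qed.
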